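(* Let $A$ be a C*-algebra and let $S\subseteq A$ be $A$-invariant, i.e. $[SA]=[AS]$. Then $$\mathrm{Ann}^L_A(S)=\mathrm{Ann}^R_A(S)=\mathrm{Ann}^L_A(\langle S\rangle_A)=\mathrm{Ann}^R_A(\langle S\rangle_A).$$
   Context: For subsets $S,T$ of a C*-algebra $A$: $[S]$ denotes the closed linear span of $S$; $ST=\{st:s\in S,t\in T\}$; $\langle S\rangle_A=[ASA]$ is the closed two-sided ideal generated by $S$. The left annihilator is $\mathrm{Ann}^L_A(S)=\{x\in A: xs=0\ \forall s\in S\}$ and the right annihilator is $\mathrm{Ann}^R_A(S)=\{x\in A: sx=0\ \forall s\in S\}$. A subset $S\subseteq A$ is called $A$-invariant if $[SA]=[AS]$. *)

(* Defs.v *)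
From HB Require Import structures.
From mathcomp Require Import all_boot all_order all_algebra.
From mathcomp Require Import all_classical all_reals all_analysis.
From mathcomp Require Import complex.
Set Implicit Arguments. Unset Strict Implicit. Unset Printing Implicit Defensive.
Import Order.TTheory GRing.Theory Num.Theory.
Import numFieldNormedType.Exports.
Local Open Scope classical_set_scope.
Local Open Scope ring_scope.
Local Open Scope complex_scope.

Record is_cstar_algebra (R : realType) (A : completeNormedModType R[i])
    (mul : A -> A -> A) (star : A -> A) : Prop := {
  cs_mulA : forall x y z, mul x (mul y z) = mul (mul x y) z;
  cs_mulDl : forall x y z, mul (x + y) z = mul x z + mul y z;
  cs_mulDr : forall x y z, mul x (y + z) = mul x y + mul x z;
  cs_mulZl : forall (c : R[i]) x y, mul (c *: x) y = c *: mul x y;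
  cs_mulZr : forall (c : R[i]) x y, mul x (c *: y) = c *: mul x y;
  cs_norm_mul : forall x y, `|mul x y| <= `|x| * `|y|;
  cs_starK : forall x, star (star x) = x;
  cs_starD : forall x y, star (x + y) = star x + star y;
  cs_starZ : forall (c : R[i]) x, star (c *: x) = (c^*)%C *: star x;
  cs_starM : forall x y, star (mul x y) = mul (star y) (star x);
  cs_cstar : forall x, `|mul (star x) x| = `|x| ^+ 2
}.

Section Defs.
Variables (R : realType) (A : completeNormedModType R[i]) (mul : A -> A -> A).

Definition lin_span (S : set A) : set A :=
  [set x | exists n (c : 'I_n -> R[i]) (v : 'I_n -> A),
     (forall i, S (v i)) /\ x = \sum_(i < n) c i *: v i].

Definition cspan (S : set A) : set A := closure (lin_span S).

Definition setmul (S T : set A) : set A :=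
  [set x | exists s t, S s /\ T t /\ x = mul s t].

(* <S>_A = [ASA] *)
Definition gen_ideal (S : set A) : set A :=
  cspan (setmul (setmul setT S) setT).

Definition annL (S : set A) : set A := [set x | forall s, S s -> mul x s = 0].
Definition annR (S : set A) : set A := [set x | forall s, S s -> mul s x = 0].

Definition A_invariant (S : set A) : Prop :=
  cspan (setmul S setT) = cspan (setmul setT S).
End Defs.
Arguments lin_span {R A} S _.
Arguments cspan {R A} S _.
Arguments setmul {R A} mul S T _.
Arguments gen_ideal {R A} mul S _.
Arguments annL {R A} mul S _.
Arguments annR {R A} mul S _.
Arguments A_invariant {R A} mul S.

(* Main.v *)
Require Import Defs.
From mathcomp Require Import all_boot all_order all_algebra.
From mathcomp Require Import all_classical all_reals all_analysis.
From mathcomp Require Import complex.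
Local Open Scope classical_set_scope.
Local Open Scope ring_scope.
Import Order.TTheory GRing.Theory Num.Theory.

Section Helpers.
Variables (R : realType) (A : completeNormedModType R[i])
  (mul : A -> A -> A) (star : A -> A) (HA : is_cstar_algebra mul star).

Lemma closure_ker (g : A -> A) (k : R[i]) : 0 <= k ->
  (forall u v, g (u - v) = g u - g v) ->
  (forall u, `|g u| <= k * `|u|) ->
  forall (T : set A) y, (forall z, T z -> g z = 0) -> closure T y -> g y = 0.
Proof.
move=> k0 gB gk T y T0 cl.
case: (eqVneq (g y) 0) => // gy0.
have gpos : 0 < `|g y| by rewrite normr_gt0.
exfalso.
have k1 : 0 < k + 1 by rewrite ltr_wpDl.
pose e := `|g y| * 2^-1.
have epos : 0 < e by rewrite /e mulr_gt0 // invr_gt0.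
pose d := e / (k + 1).
have dpos : 0 < d by rewrite /d mulr_gt0 // invr_gt0.
have [z [Tz bz]] := cl _ (nbhsx_ballx y d dpos).
move: bz; rewrite -ball_normE /ball_ /= => bz.
have : `|g y| < `|g y|.
  have E : g y = g (y - z) by rewrite gB (T0 z Tz) subr0.
  rewrite {1}E.
  apply: (le_lt_trans (gk _)).
  apply: (le_lt_trans (y := (k + 1) * `|y - z|)).
    by rewrite ler_wpM2r // lerDl.
  apply: (lt_le_trans (y := (k + 1) * d)); first by rewrite ltr_pM2l.
  rewrite /d mulrC divfK; last by rewrite gt_eqF.
  rewrite /e ger_pMr // invf_le1 // ler1n //.
by rewrite ltxx.
Qed.

Lemma span_ker (g : A -> A) :
  (forall u v, g (u + v) = g u + g v) ->
  (forall (c : R[i]) u, g (c *: u) = c *: g u) ->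
  forall (T : set A) y, (forall z, T z -> g z = 0) -> lin_span T y -> g y = 0.
Proof.
move=> gD gZ T y T0 [n [c [v [Tv ->]]]].
elim: n c v Tv => [|n IH] c v Tv.
  by rewrite big_ord0; have := gZ 0 0; rewrite !scale0r.
rewrite big_ord_recr /= gD gZ (T0 _ (Tv ord_max)) scaler0 addr0.
by apply: IH => i; apply: Tv.
Qed.

Lemma cspan_ker (g : A -> A) (k : R[i]) : 0 <= k ->
  (forall u v, g (u + v) = g u + g v) ->
  (forall (c : R[i]) u, g (c *: u) = c *: g u) ->
  (forall u, `|g u| <= k * `|u|) ->
  forall (T : set A) y, (forall z, T z -> g z = 0) -> cspan T y -> g y = 0.
Proof.
move=> k0 gD gZ gk T y T0 cl.
have gB : forall u v, g (u - v) = g u - g v.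
  by move=> u v; rewrite gD -scaleN1r gZ scaleN1r.
apply: (@closure_ker g k k0 gB gk (lin_span T) y _ cl) => z; exact: span_ker.

Qed.

Lemma sub_cspan (T : set A) y : T y -> cspan T y.
Proof.
move=> Ty; apply: subset_closure.
exists 1%N, (fun _ => 1), (fun _ => y); split => //.
by rewrite big_ord1 scale1r.
Qed.

Let mA := cs_mulA HA.

Lemma mul0x x : mul 0 x = 0.
Proof. by have := cs_mulZl HA 0 0 x; rewrite ?conjc0 !scale0r. Qed.
Lemma mulx0 x : mul x 0 = 0.
Proof. by have := cs_mulZr HA 0 x 0; rewrite ?conjc0 !scale0r. Qed.

Lemma star0 : star 0 = 0.
Proof. by have := cs_starZ HA 0 0; rewrite ?conjc0 !scale0r. Qed.

Lemma cs_yy y : mul (star y) y = 0 -> y = 0.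
Proof.
move=> h; apply/eqP; rewrite -normr_eq0.
have := cs_cstar HA y; rewrite h normr0 => /esym/eqP.
by rewrite expf_eq0.
Qed.

Lemma cs_K y : mul (mul y (star y)) y = 0 -> y = 0.
Proof.
move=> h; apply: cs_yy.
pose p := mul (star y) y.
have sp : star p = p by rewrite /p (cs_starM HA) (cs_starK HA).
apply: cs_yy; rewrite -/p sp /p -!mA (mA y) h mulx0 //.
Qed.

Lemma cs_K2 y : (forall b, mul y b = 0) -> y = 0.
Proof.
move=> h.
have : star y = 0.
  by apply: cs_yy; rewrite (cs_starK HA) h.
by move=> e; rewrite -(cs_starK HA y) e star0.
Qed.

Lemma cs_K3 y : (forall a, mul a y = 0) -> y = 0.
Proof. by move=> h; apply: cs_yy; rewrite h. Qed.

Lemma gL x : [/\ forall u v, mul x (u + v) = mul x u + mul x v,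
  forall (c : R[i]) u, mul x (c *: u) = c *: mul x u &
  forall u, `|mul x u| <= `|x| * `|u|].
Proof.
split=> *; [by rewrite (cs_mulDr HA)|by rewrite (cs_mulZr HA)|exact (cs_norm_mul HA _ _)].
Qed.

Lemma gR x : [/\ forall u v, mul (u + v) x = mul u x + mul v x,
  forall (c : R[i]) u, mul (c *: u) x = c *: mul u x &
  forall u, `|mul u x| <= `|x| * `|u|].
Proof.
split=> *; [by rewrite (cs_mulDl HA)|by rewrite (cs_mulZl HA)|].
rewrite mulrC; exact (cs_norm_mul HA _ _).
Qed.

Lemma cspan_kerL x T y : (forall z, T z -> mul x z = 0) -> cspan T y -> mul x y = 0.
Proof. by case: (gL x) => h1 h2 h3; exact: (@cspan_ker (mul x) _ (normr_ge0 x) h1 h2 h3). Qed.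

Lemma cspan_kerR x T y : (forall z, T z -> mul z x = 0) -> cspan T y -> mul y x = 0.
Proof.
case: (gR x) => h1 h2 h3.
exact: (@cspan_ker (fun u => mul u x) _ (normr_ge0 x) h1 h2 h3).
Qed.

End Helpers.
Arguments mul0x {R A mul star}.
Arguments mulx0 {R A mul star}.
Arguments star0 {R A mul star}.
Arguments cs_yy {R A mul star}.
Arguments cs_K {R A mul star}.
Arguments cs_K2 {R A mul star}.
Arguments cs_K3 {R A mul star}.
Arguments gL {R A mul star}.
Arguments gR {R A mul star}.
Arguments cspan_kerL {R A mul star}.
Arguments cspan_kerR {R A mul star}.

Theorem proposition2p5 (R : realType) (A : completeNormedModType R[i])
    (mul : A -> A -> A) (star : A -> A)
    (HA : is_cstar_algebra mul star) (S : set A)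
    (HS : A_invariant mul S) :
  annL mul S = annR mul S /\
  annR mul S = annL mul (gen_ideal mul S) /\
  annL mul (gen_ideal mul S) = annR mul (gen_ideal mul S).
Proof.
have mA := cs_mulA HA.
have P1 : forall x, annL mul S x -> forall a s, S s -> mul x (mul a s) = 0.
  move=> x Hx a s Ss.
  have : cspan (setmul mul setT S) (mul a s) by apply: sub_cspan; exists a, s.
  rewrite -HS. apply: (cspan_kerL HA) => _ [s' [b [Ss' [_ ->]]]].
  by rewrite mA Hx // (mul0x HA).
have P2 : forall x, annR mul S x -> forall a s, S s -> mul s (mul a x) = 0.
  move=> x Hx a s Ss.
  have : cspan (setmul mul S setT) (mul s a) by apply: sub_cspan; exists s, a.
  rewrite mA HS; apply: (cspan_kerR HA) => _ [b [s' [_ [Ss' ->]]]].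
  by rewrite -mA Hx // (mulx0 HA).
have E1 : annL mul S = annR mul S.
  apply/seteqP; split => x Hx s Ss.
    apply: (cs_K HA); set w := star (mul s x).
    have -> : mul (mul (mul s x) w) (mul s x) = mul s (mul (mul x (mul w s)) x).
      by rewrite !mA.
    by rewrite (P1 x Hx w s Ss) (mul0x HA) (mulx0 HA).
  apply: (cs_K HA); set w := star (mul x s).
  have -> : mul (mul (mul x s) w) (mul x s) = mul (mul x (mul s (mul w x))) s.
    by rewrite !mA.
  by rewrite (P2 x Hx w s Ss) (mulx0 HA) (mul0x HA).
have E2 : annL mul S = annL mul (gen_ideal mul S).
  apply/seteqP; split => x Hx.
    move=> t; apply: (cspan_kerL HA) => _ [_ [b [[a [s [_ [Ss ->]]]] [_ ->]]]].
    by rewrite mA (P1 x Hx a s Ss) (mul0x HA).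
  have Q : forall a s, S s -> mul x (mul a s) = 0.
    move=> a s Ss; apply: (cs_K2 HA) => b.
    rewrite -mA; apply: Hx; apply: sub_cspan.
    exists (mul a s), b; split; last by []. by exists a, s.
  move=> s Ss; apply: (cs_K HA); set w := star (mul x s).
  have -> : mul (mul (mul x s) w) (mul x s) = mul x (mul (mul s (mul w x)) s).
    by rewrite !mA.
  by rewrite (Q (mul s (mul w x)) s Ss).
have E3 : annR mul S = annR mul (gen_ideal mul S).
  apply/seteqP; split => x Hx.
    move=> t; apply: (cspan_kerR HA) => _ [_ [b [[a [s [_ [Ss ->]]]] [_ ->]]]].
    by rewrite -!mA (P2 x Hx b s Ss) (mulx0 HA).
  have Q : forall b s, S s -> mul s (mul b x) = 0.
    move=> b s Ss; apply: (cs_K3 HA) => a.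
    rewrite !mA; apply: Hx; apply: sub_cspan.
    exists (mul a s), b; split; last by []. by exists a, s.
  move=> s Ss; apply: (cs_K HA); set w := star (mul s x).
  have -> : mul (mul (mul s x) w) (mul s x) = mul s (mul (mul x (mul w s)) x).
    by rewrite !mA.
  by rewrite (Q (mul x (mul w s)) s Ss).
rewrite -E2 -E3 E1; split => //.
Qed.
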